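(* For every $k\in\mathbb N$, the $k$-th standard Fibonacci-like partition of the first kind $\mathfrak P_k$ is a partition of $\mathbb N$ into exactly $F(k)$ parts. Explicitly: $\mathfrak P_1=\mathfrak P_2=\{\mathbb N\}$, and for $k\geq 3$, with $i=k-3$, the $F(k)$ sets $$R_{i,0},R_{i,1},\ldots,R_{i,F(i+2)-1},\ R_{i+1,0},R_{i+1,1},\ldots,R_{i+1,F(i+1)-1}$$ are pairwise disjoint and their union is $\mathbb N$.
   Context: $\mathbb N=\{1,2,\dots\}$. $\varphi=\frac{1+\sqrt5}{2}$; $a(n)=\lfloor n\varphi\rfloor$ for $n\in\mathbb N$. $F$ is the Fibonacci sequence with $F(0)=0$, $F(1)=F(2)=1$, $F(n)=F(n-1)+F(n-2)$. For $i\in\mathbb Z^{\geq 0}$, $j\in\mathbb Z$: $f_{i,j}(n)=F(i+1)a(n)+F(i)n-j$ ($n\in\mathbb N$) and $R_{i,j}=\{f_{i,j}(n)\mid n\in\mathbb N\}$. The $k$-th standard Fibonacci-like partition of the first kind is $\mathfrak P_1=\mathfrak P_2=\{\mathbb N\}$ and, for $k\ge 3$, $\mathfrak P_k=\{R_{i,0},\ldots,R_{i,F(i+2)-1},R_{i+1,0},\ldots,R_{i+1,F(i+1)-1}\}$ with $i=k-3$. *)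

(* Defs.v *)
From Stdlib Require Import Reals ZArith Lia.
Open Scope R_scope.

Definition phi : R := (1 + sqrt 5) / 2.

Definition a (n : nat) : Z := Int_part (INR n * phi).

Fixpoint F (n : nat) : nat :=
  match n with
  | O => O
  | S O => 1%nat
  | S ((S m) as p) => (F p + F m)%nat
  end.

Open Scope Z_scope.

Definition f (i : nat) (j : Z) (n : nat) : Z :=
  Z.of_nat (F (i + 1)) * a n + Z.of_nat (F i) * Z.of_nat n - j.

Definition Rset (i : nat) (j : Z) : Z -> Prop :=
  fun z => exists n : nat, (1 <= n)%nat /\ z = f i j n.

Definition Nset : Z -> Prop := fun z => 1 <= z.

(* The m-th part (m < F k) of the k-th standard Fibonacci-like partition of the
   first kind, listed in the order R_{i,0},...,R_{i,F(i+2)-1},R_{i+1,0},...,R_{i+1,F(i+1)-1}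
   with i = k - 3 (for k >= 3); for k = 1, 2 the single part is N. *)
Definition part (k : nat) (m : nat) : Z -> Prop :=
  if (k <=? 2)%nat then Nset
  else let i := (k - 3)%nat in
       if (m <? F (i + 2))%nat then Rset i (Z.of_nat m)
       else Rset (i + 1) (Z.of_nat (m - F (i + 2))).

(* Main.v *)
Require Import Defs.
From Stdlib Require Import Reals ZArith.
From Stdlib Require Import Lra Lia Psatz.
Require Import Defs.
Open Scope R_scope.

Lemma s5 : sqrt 5 * sqrt 5 = 5.
Proof. apply sqrt_sqrt; lra. Qed.

Lemma phi_sq : phi * phi = phi + 1.
Proof. unfold phi. pose proof s5. nra. Qed.

Lemma phi_bnd : 1 < phi < 2.
Proof. unfold phi. pose proof s5. pose proof (sqrt_pos 5). nra. Qed.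

Lemma phm x : x * phi * phi = x * phi + x.
Proof. rewrite Rmult_assoc, phi_sq. ring. Qed.

Lemma floor_char x k : IZR k <= x < IZR k + 1 -> Int_part x = k.
Proof.
  intros [H1 H2]. unfold Int_part.
  rewrite <- (tech_up x (k+1)). lia.
  rewrite plus_IZR; lra. rewrite plus_IZR; lra.
Qed.

Lemma a_bnd n : IZR (a n) <= INR n * phi < IZR (a n) + 1.
Proof. unfold a. pose proof (base_Int_part (INR n * phi)). lra. Qed.

Lemma a_eq (n : nat) (k : Z) : IZR k <= INR n * phi < IZR k + 1 -> a n = k.
Proof. intros. unfold a. apply floor_char; auto. Qed.

Lemma descent : forall N : nat, forall k n : Z, (0 <= k)%Z -> (1 <= n)%Z -> (n <= Z.of_nat N)%Z ->
  (k*k = n*k + n*n)%Z -> False.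
Proof.
  induction N; intros k n Hk Hn HN E. lia.
  assert (n < k)%Z by nia.
  assert (k < 2*n)%Z by nia.
  apply (IHN n (k - n)%Z); try lia; nia.
Qed.

Lemma irr (k n : Z) : (1 <= n)%Z -> IZR k = IZR n * phi -> False.
Proof.
  intros Hn E.
  assert (Hk : (0 <= k)%Z).
  { apply le_IZR. rewrite E. pose proof phi_bnd. apply IZR_le in Hn. nra. }
  apply (descent (Z.to_nat n) k n); try lia; [idtac].
  apply eq_IZR. rewrite !mult_IZR, plus_IZR, !mult_IZR. rewrite E.
  pose proof (phm (IZR n * IZR n)). nra.
Qed.

Lemma a_strict n : (1 <= n)%nat -> IZR (a n) < INR n * phi.
Proof.
  intros Hn. destruct (a_bnd n) as [H1 H2]. destruct H1 as [H1|H1]; auto.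
  exfalso. apply (irr (a n) (Z.of_nat n)). lia. rewrite <- INR_IZR_INZ. lra.
Qed.

Lemma a_pos m : (1 <= m)%nat -> (1 <= a m)%Z.
Proof.
  intros Hm. destruct (a_bnd m). pose proof phi_bnd.
  apply le_INR in Hm. simpl in Hm.
  assert (IZR (a m) > 0) by nra. apply lt_IZR in H2. lia.
Qed.

Lemma aa (m n : nat) : (1 <= m)%nat -> Z.of_nat n = a m -> a n = (a m + Z.of_nat m - 1)%Z.
Proof.
  intros Hm E. apply a_eq.
  rewrite INR_IZR_INZ, E. rewrite minus_IZR, plus_IZR, <- INR_IZR_INZ.
  pose proof (a_strict m Hm). destruct (a_bnd m). pose proof phi_bnd.
  set (p := IZR (a m)) in *. set (M := INR m) in *.
  assert (Hi : p * phi - (p + M - 1) = 1 - (M*phi - p)*(phi - 1)).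
  { pose proof (phm M). lra. }
  assert (0 < (M*phi - p)*(phi - 1) < 1) by (split; nra).
  lra.
Qed.

Lemma ab (m n : nat) : (1 <= m)%nat -> Z.of_nat n = (a m + Z.of_nat m)%Z -> a n = (2 * a m + Z.of_nat m)%Z.
Proof.
  intros Hm E. apply a_eq.
  rewrite INR_IZR_INZ, E. rewrite plus_IZR, mult_IZR, plus_IZR, <- INR_IZR_INZ.
  pose proof (a_strict m Hm). destruct (a_bnd m). pose proof phi_bnd.
  set (p := IZR (a m)) in *. set (M := INR m) in *.
  assert (Hi : (p + M) * phi - (2*p + M) = (M*phi - p)*(2 - phi)).
  { pose proof (phm M). lra. }
  assert (0 < (M*phi - p)*(2 - phi) < 1) by (split; nra).
  lra.
Qed.

Lemma beatty_disj (m m' : nat) : (1 <= m)%nat -> (1 <= m')%nat ->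
  a m = (a m' + Z.of_nat m')%Z -> False.
Proof.
  intros Hm Hm' E.
  pose proof (a_strict m Hm). destruct (a_bnd m).
  pose proof (a_strict m' Hm'). destruct (a_bnd m'). pose proof phi_bnd.
  assert (Ep : IZR (a m) = IZR (a m') + INR m') by (rewrite E, plus_IZR, INR_IZR_INZ; auto).
  set (p := IZR (a m)) in *. set (q := IZR (a m')) in *.
  set (M := INR m) in *. set (M' := INR m') in *.
  pose proof (phm M). pose proof (phm M').
  assert (M - p*(phi-1) = (M*phi - p)*(phi-1)) by lra.
  assert ((p+1)*(phi-1) - M = (p+1 - M*phi)*(phi-1)) by lra.
  assert (M' - p*(2-phi) = (M'*phi - q)*(2-phi)) by (rewrite Ep; lra).
  assert ((p+1)*(2-phi) - M' = (q + 1 - M'*phi)*(2-phi)) by (rewrite Ep; lra).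
  assert (0 < (M*phi - p)*(phi-1)) by nra.
  assert (0 < (p+1 - M*phi)*(phi-1)) by nra.
  assert (0 < (M'*phi - q)*(2-phi)) by nra.
  assert (0 < (q + 1 - M'*phi)*(2-phi)) by nra.
  assert (L1 : p < M + M') by lra.
  assert (L2 : M + M' < p + 1) by lra.
  unfold p, M, M' in *. rewrite !INR_IZR_INZ in *.
  rewrite <- plus_IZR in L1, L2. rewrite <- plus_IZR in L2.
  apply lt_IZR in L1. apply lt_IZR in L2. lia.
Qed.

Lemma beatty_cover (n : nat) : (1 <= n)%nat ->
  (exists m, (1 <= m)%nat /\ Z.of_nat n = a m) \/
  (exists m, (1 <= m)%nat /\ Z.of_nat n = (a m + Z.of_nat m)%Z).
Proof.
  intros Hn.
  pose proof (a_strict n Hn). destruct (a_bnd n). pose proof phi_bnd.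
  set (t := (a n - Z.of_nat n)%Z).
  assert (Et : IZR t = IZR (a n) - INR n) by (unfold t; rewrite minus_IZR, INR_IZR_INZ; auto).
  assert (HN : 1 <= INR n) by (apply le_INR in Hn; simpl in Hn; lra).
  set (q := IZR (a n)) in *. set (N := INR n) in *.
  pose proof (phm N). pose proof (phm (IZR t)). pose proof phi_sq.
  assert (A1 : IZR t * phi - N = phi * (q - N*phi)) by (rewrite Et; lra).
  assert (A2 : (IZR t + 1) * phi - N = phi * (q + 1 - N*phi)) by (rewrite Et; lra).
  assert (B1 : IZR t * phi < N) by nra.
  assert (B2 : N < (IZR t + 1) * phi) by nra.
  assert (Ht0 : (0 <= t)%Z).
  { assert (Hx : IZR t > -1) by nra. apply lt_IZR in Hx. lia. }
  assert (Htn : (t < Z.of_nat n)%Z).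
  { assert (Hx : IZR t < N) by nra. unfold N in Hx. rewrite INR_IZR_INZ in Hx. apply lt_IZR in Hx. lia. }
  destruct (Rtotal_order ((IZR t + 1) * phi) (N + 1)) as [Hl|[He|Hg]].
  - left. exists (Z.to_nat (t + 1)). split. lia.
    symmetry. apply a_eq. rewrite INR_IZR_INZ, Z2Nat.id by lia. rewrite plus_IZR.
    unfold N in *; rewrite INR_IZR_INZ in *. lra.
  - exfalso. apply (irr (Z.of_nat n + 1) (t + 1)). lia.
    rewrite !plus_IZR. rewrite <- INR_IZR_INZ. fold N. lra.
  - right. exists (Z.to_nat (Z.of_nat n - t)). split. lia.
    assert (Ha : a (Z.to_nat (Z.of_nat n - t)) = t).
    { apply a_eq. rewrite INR_IZR_INZ, Z2Nat.id by lia. rewrite minus_IZR, <- INR_IZR_INZ. fold N.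
      assert ((N - IZR t) * phi - IZR t = phi * (N - IZR t * phi)) by lra.
      assert (IZR t + 1 - (N - IZR t) * phi = phi*((IZR t + 1)*phi - (N+1))) by lra.
      split; nra. }
    rewrite Ha. lia.
Qed.

Lemma a_ltS n : (a n < a (S n))%Z.
Proof.
  destruct (a_bnd n). destruct (a_bnd (S n)). pose proof phi_bnd.
  rewrite S_INR in *. apply lt_IZR. lra.
Qed.

Lemma a_mono n1 n2 : (n1 < n2)%nat -> (a n1 < a n2)%Z.
Proof.
  induction n2; intros H. lia.
  pose proof (a_ltS n2). destruct (Nat.eq_dec n1 n2). subst; auto.
  specialize (IHn2 ltac:(lia)). lia.
Qed.
Open Scope Z_scope.

Lemma Fs (i : nat) : F (i + 2) = (F (i + 1) + F i)%nat.
Proof. rewrite !(Nat.add_comm i). reflexivity. Qed.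

Lemma F_pos (i : nat) : (1 <= F (i + 1))%nat.
Proof.
  induction i as [|i IH]. simpl; lia.
  replace (S i + 1)%nat with (i + 2)%nat by lia. rewrite Fs. lia.
Qed.

Lemma E1 (i : nat) (j : Z) (m n : nat) : (1 <= m)%nat -> Z.of_nat n = a m ->
  f i j n = f (i+1) (j + Z.of_nat (F (i+1))) m.
Proof.
  intros Hm E. unfold f. rewrite (aa m n Hm E), E.
  replace (i+1+1)%nat with (i+2)%nat by lia. rewrite Fs, Nat2Z.inj_add. ring.
Qed.

Lemma E2 (i : nat) (j : Z) (m n : nat) : (1 <= m)%nat -> Z.of_nat n = a m + Z.of_nat m ->
  f i j n = f (i+2) j m.
Proof.
  intros Hm E. unfold f. rewrite (ab m n Hm E), E.
  replace (i+2+1)%nat with ((i+1)+2)%nat by lia. rewrite (Fs (i+1)), Fs.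
  replace (i+1+1)%nat with (i+2)%nat by lia. rewrite Fs, !Nat2Z.inj_add. ring.
Qed.

Lemma f_lt (i : nat) (j : Z) (n1 n2 : nat) : (n1 < n2)%nat -> f i j n1 < f i j n2.
Proof.
  intros H. unfold f. pose proof (a_mono _ _ H). pose proof (F_pos i).
  assert (Z.of_nat (F (i+1)) * a n1 < Z.of_nat (F (i+1)) * a n2) by (apply Z.mul_lt_mono_pos_l; lia).
  assert (Z.of_nat (F i) * Z.of_nat n1 <= Z.of_nat (F i) * Z.of_nat n2) by (apply Z.mul_le_mono_nonneg_l; lia).
  lia.
Qed.

Lemma f_inj (i : nat) (j : Z) (n1 n2 : nat) : f i j n1 = f i j n2 -> n1 = n2.
Proof.
  intros E. destruct (Nat.lt_total n1 n2) as [H|[H|H]]; auto;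
  apply (f_lt i j) in H; lia.
Qed.

Lemma L1 (i : nat) (j z : Z) : Rset i j z <-> Rset (i+1) (j + Z.of_nat (F (i+1))) z \/ Rset (i+2) j z.
Proof.
  split.
  - intros [n [Hn ->]]. destruct (beatty_cover n Hn) as [[m [Hm E]]|[m [Hm E]]].
    + left. exists m. split; auto. apply E1; auto.
    + right. exists m. split; auto. apply E2; auto.
  - intros [[m [Hm ->]]|[m [Hm ->]]].
    + pose proof (a_pos m Hm). exists (Z.to_nat (a m)). split. lia.
      symmetry. apply E1; auto. lia.
    + pose proof (a_pos m Hm). exists (Z.to_nat (a m + Z.of_nat m)). split. lia.
      symmetry. apply E2; auto. lia.
Qed.

Lemma L2 (i : nat) (j z : Z) : Rset (i+1) (j + Z.of_nat (F (i+1))) z -> Rset (i+2) j z -> False.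
Proof.
  intros [m [Hm ->]] [m' [Hm' E]].
  pose proof (a_pos m Hm). pose proof (a_pos m' Hm').
  rewrite <- (E1 i j m (Z.to_nat (a m))) in E by (auto; lia).
  rewrite <- (E2 i j m' (Z.to_nat (a m' + Z.of_nat m'))) in E by (auto; lia).
  apply f_inj in E. apply (beatty_disj m m'); auto. lia.
Qed.

Lemma part_eq (i m : nat) : part (i+3) m =
  if (m <? F (i+2))%nat then Rset i (Z.of_nat m) else Rset (i+1) (Z.of_nat (m - F (i+2))).
Proof.
  unfold part. replace ((i + 3 <=? 2)%nat) with false by (symmetry; apply Nat.leb_gt; lia).
  replace (i + 3 - 3)%nat with i by lia. reflexivity.
Qed.

Definition P k :=
  (forall m, (m < F k)%nat -> forall z, part k m z -> Nset z) /\
  (forall m1 m2 : nat, (m1 < F k)%nat -> (m2 < F k)%nat -> m1 <> m2 ->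
     forall z : Z, part k m1 z -> part k m2 z -> False) /\
  (forall z, Nset z -> exists m, (m < F k)%nat /\ part k m z).

Lemma P3 : P 3.
Proof.
  assert (E : forall m, part 3 m = part (0+3) m) by reflexivity.
  assert (A : forall z, Rset 0 0 z <-> exists n, (1 <= n)%nat /\ z = a n).
  { intros z. unfold Rset, f. simpl F. split; intros [n [H ->]]; exists n; split; auto; lia. }
  assert (B : forall z, Rset 1 0 z <-> exists n, (1 <= n)%nat /\ z = a n + Z.of_nat n).
  { intros z. unfold Rset, f. simpl F. split; intros [n [H ->]]; exists n; split; auto; lia. }
  unfold P. simpl F.
  split; [|split].
  - intros m Hm z. unfold Nset. rewrite E, part_eq. simpl F.
    destruct m as [|[|]]; simpl; try lia.
    + intros HA. apply A in HA. destruct HA as [n [Hn ->]]. pose proof (a_pos n Hn). lia.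
    + intros HB. apply B in HB. destruct HB as [n [Hn ->]]. pose proof (a_pos n Hn). lia.
  - intros m1 m2 H1 H2 Hne z. rewrite !E, !part_eq. simpl F.
    assert (Rset 0 0 z -> Rset 1 0 z -> False).
    { intros HA HB. apply A in HA. apply B in HB.
      destruct HA as [n [Hn ->]]. destruct HB as [n' [Hn' E']].
      apply (beatty_disj n n'); auto. }
    destruct m1 as [|[|]]; destruct m2 as [|[|]]; simpl; try lia; eauto.
  - intros z Hz. unfold Nset in Hz.
    destruct (beatty_cover (Z.to_nat z)) as [[m [Hm Em]]|[m [Hm Em]]]. lia.
    + exists 0%nat. split. lia. rewrite E, part_eq. simpl. apply A. exists m. split; auto. lia.
    + exists 1%nat. split. lia. rewrite E, part_eq. simpl. apply B. exists m. split; auto. lia.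
Qed.

Definition g (i m : nat) : nat :=
  if (m <? F (i+1))%nat then (F (i+2) + m)%nat
  else if (m <? F (i+3))%nat then (m - F (i+1))%nat
  else (m - F (i+3))%nat.

Lemma Fs3 (i : nat) : F (i+3) = (F (i+2) + F (i+1))%nat.
Proof. replace (i+3)%nat with ((i+1)+2)%nat by lia. rewrite Fs. f_equal. f_equal. lia. Qed.
Lemma Fs4 (i : nat) : F (i+4) = (F (i+3) + F (i+2))%nat.
Proof. replace (i+4)%nat with ((i+2)+2)%nat by lia. rewrite Fs. f_equal; f_equal; lia. Qed.

Lemma part_new (i m : nat) : part (i+4) m =
  if (m <? F (i+3))%nat then Rset (i+1) (Z.of_nat m) else Rset (i+2) (Z.of_nat (m - F (i+3))).
Proof.
  replace (i+4)%nat with ((i+1)+3)%nat by lia. rewrite part_eq.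
  replace (i+1+2)%nat with (i+3)%nat by lia. replace (i+1+1)%nat with (i+2)%nat by lia. reflexivity.
Qed.

Ltac bcase m x := destruct (Nat.ltb_spec m x).

Lemma claim1 i m z : (m < F (i+4))%nat -> part (i+4) m z -> (g i m < F (i+3))%nat /\ part (i+3) (g i m) z.
Proof.
  intros Hm. pose proof (Fs3 i). pose proof (Fs4 i). rewrite part_new, part_eq. unfold g.
  bcase m (F (i+1)); bcase m (F (i+3)); try lia.
  - intros Hp. bcase (F (i+2) + m)%nat (F (i+2)); try lia. split. lia.
    replace (F (i+2) + m - F (i+2))%nat with m by lia. auto.
  - intros Hp. bcase (m - F (i+1))%nat (F (i+2)); try lia. split. lia.
    apply L1. left. replace (Z.of_nat (m - F (i+1)) + Z.of_nat (F (i+1))) with (Z.of_nat m) by lia. auto.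
  - intros Hp. bcase (m - F (i+3))%nat (F (i+2)); try lia. split. lia.
    apply L1. right. auto.
Qed.

Lemma claim2 i m' z : (m' < F (i+3))%nat -> part (i+3) m' z ->
  exists m, (m < F (i+4))%nat /\ g i m = m' /\ part (i+4) m z.
Proof.
  intros Hm. pose proof (Fs3 i). pose proof (Fs4 i). rewrite part_eq.
  bcase m' (F (i+2)).
  - intros Hp. apply L1 in Hp. destruct Hp as [Hp|Hp].
    + exists (m' + F (i+1))%nat. rewrite part_new. unfold g.
      bcase (m' + F (i+1))%nat (F (i+1)); bcase (m' + F (i+1))%nat (F (i+3)); try lia.
      split. lia. split. lia. rewrite Nat2Z.inj_add. auto.
    + exists (m' + F (i+3))%nat. rewrite part_new. unfold g.
      bcase (m' + F (i+3))%nat (F (i+1)); bcase (m' + F (i+3))%nat (F (i+3)); try lia.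
      split. lia. split. lia. replace (m' + F (i+3) - F (i+3))%nat with m' by lia. auto.
  - intros Hp. exists (m' - F (i+2))%nat. rewrite part_new. unfold g.
    bcase (m' - F (i+2))%nat (F (i+1)); bcase (m' - F (i+2))%nat (F (i+3)); try lia.
    split. lia. split. lia. auto.
Qed.

Lemma claim3 i m1 m2 z : (m1 < F (i+4))%nat -> (m2 < F (i+4))%nat -> g i m1 = g i m2 ->
  part (i+4) m1 z -> part (i+4) m2 z -> m1 = m2.
Proof.
  intros H1 H2. pose proof (Fs3 i). pose proof (Fs4 i). rewrite !part_new. unfold g.
  bcase m1 (F (i+1)); bcase m1 (F (i+3)); bcase m2 (F (i+1)); bcase m2 (F (i+3)); try lia;
  intros Hg Hp1 Hp2; try lia; exfalso.
  - apply (L2 i (Z.of_nat (m2 - F (i+3))) z); auto.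
    replace (Z.of_nat (m2 - F (i+3)) + Z.of_nat (F (i+1))) with (Z.of_nat m1) by lia. auto.
  - apply (L2 i (Z.of_nat (m1 - F (i+3))) z); auto.
    replace (Z.of_nat (m1 - F (i+3)) + Z.of_nat (F (i+1))) with (Z.of_nat m2) by lia. auto.
Qed.

Lemma step i : P (i+3) -> P (i+4).
Proof.
  intros [HN [HD HC]]. split; [|split].
  - intros m Hm z Hp. destruct (claim1 i m z Hm Hp). eauto.
  - intros m1 m2 H1 H2 Hne z Hp1 Hp2.
    destruct (Nat.eq_dec (g i m1) (g i m2)) as [E|E].
    + apply Hne. eapply claim3; eauto.
    + destruct (claim1 i m1 z H1 Hp1). destruct (claim1 i m2 z H2 Hp2). eauto.
  - intros z Hz. destruct (HC z Hz) as [m' [Hm' Hp]].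
    destruct (claim2 i m' z Hm' Hp) as [m [? [? ?]]]. eauto.
Qed.

Lemma P_all i : P (i+3).
Proof.
  induction i. apply P3. replace (S i + 3)%nat with (i+4)%nat by lia. apply step; auto.
Qed.

Theorem theorem3p2 (k : nat) (hk : (1 <= k)%nat) :
  (forall m : nat, (m < F k)%nat -> exists z : Z, part k m z) /\
  (forall m1 m2 : nat, (m1 < F k)%nat -> (m2 < F k)%nat -> m1 <> m2 ->
     forall z : Z, part k m1 z -> part k m2 z -> False) /\
  (forall z : Z, (exists m : nat, (m < F k)%nat /\ part k m z) <-> Nset z).
Proof.
  assert (NE : forall m, exists z, part k m z).
  { intros m. unfold part. destruct (k <=? 2)%nat.
    - exists 1. unfold Nset. lia.
    - destruct (m <? F (k - 3 + 2))%nat; eexists; exists 1%nat; split; eauto. }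
  destruct (Nat.le_gt_cases k 2) as [Hk|Hk].
  - assert (F k = 1%nat) by (destruct k as [|[|[|]]]; simpl; lia).
    assert (Ep : forall m, part k m = Nset).
    { intros m. unfold part. replace (k <=? 2)%nat with true by (symmetry; apply Nat.leb_le; lia). auto. }
    rewrite H. split; [|split].
    + intros m _. auto.
    + intros; lia.
    + intros z. split. intros [m [_ Hz]]; rewrite Ep in Hz; auto. intros Hz. exists 0%nat. rewrite Ep. split; auto.
  - replace k with ((k-3)+3)%nat by lia. destruct (P_all (k-3)) as [HN [HD HC]].
    split; [|split].
    + intros m _. replace (k - 3 + 3)%nat with k by lia. auto.
    + auto.
    + intros z. split. intros [m [? ?]]; eauto. auto.
Qed.
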